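(* Let $n\ge1$, $d\in(0,2]$, and for $\eta\in[0,\pi/2]$ let $T_\eta=\{(\cos\eta\,\mathbf{v}_1;\sin\eta\,\mathbf{v}_2):\mathbf{v}_1,\mathbf{v}_2\in S^{n-1}\}\subset\mathbb{R}^{2n}$. Put $\Delta\eta=2\arcsin(d/2)$ and $t(d)=\left\lfloor\frac{\pi}{4\arcsin(d/2)}\right\rfloor$. Then: (1) the minimum angular interval $|\eta-\eta'|$ between $\eta,\eta'\in[0,\pi/2]$ for which the leaves $T_\eta,T_{\eta'}$ are at minimum distance at least $d$ is $\Delta\eta=2\arcsin(d/2)$; (2) the maximum number of disjoint intervals of length $\Delta\eta$ fitting in $[0,\pi/2]$ is $t(d)$; (3) the leaves $T_\eta$ are pairwise at minimum distance at least $d$ if the parameters are chosen as either (a) $\eta=\eta_0+k\Delta\eta$ for $k\in\{0,1,\dots,t(d)\}$, where $0\le\eta_0\le(\pi/2-t(d)\Delta\eta)/2$, or (b) $\eta=\pi/4+k\Delta\eta$ for $k\in\{0,1,\dots,\lfloor t(d)/2\rfloor\}$.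
   Context: $S^{n-1}$ is the unit sphere of $\mathbb{R}^n$; the minimum distance between two sets $A,B\subset\mathbb{R}^{2n}$ is $\inf\{\|a-b\|:a\in A,b\in B\}$. *)

(* Defs.v *)
From HB Require Import structures.
From mathcomp Require Import all_boot all_order all_algebra.
From mathcomp Require Import all_classical all_reals all_analysis.
Unset Printing Implicit Defensive.
Import Order.TTheory GRing.Theory Num.Theory.
Local Open Scope classical_set_scope.
Local Open Scope ring_scope.

Definition enorm {R : realType} {m : nat} (x : 'rV[R]_m) : R :=
  Num.sqrt (\sum_(i < m) x ord0 i ^+ 2).

Definition unit_sphere (R : realType) (n : nat) : set 'rV[R]_n :=
  [set v | enorm v = 1].

Definition leafT (R : realType) (n : nat) (eta : R) : set 'rV[R]_(n + n) :=
  [set x | exists v1 v2, unit_sphere R n v1 /\ unit_sphere R n v2 /\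
             x = row_mx (cos eta *: v1) (sin eta *: v2)].

Definition min_dist {R : realType} {m : nat} (A B : set 'rV[R]_m) : R :=
  inf [set r | exists a b, A a /\ B b /\ r = enorm (a - b)].

Definition delta_eta {R : realType} (d : R) : R := 2 * asin (d / 2).

Definition t_d {R : realType} (d : R) : int := Num.floor (pi / (4 * asin (d / 2))).

(* m intervals [a i, a i + L] (i < m) lie in [0, pi/2] and are pairwise
   disjoint (as intervals of the line, i.e. their interiors do not meet). *)
Definition intervals_fit {R : realType} (L : R) (m : nat) (a : nat -> R) : Prop :=
  (forall i, (i < m)%N -> 0 <= a i /\ a i + L <= pi / 2) /\
  (forall i j, (i < m)%N -> (j < m)%N -> i <> j ->
     forall x : R, ~ ((a i < x < a i + L) /\ (a j < x < a j + L))).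

(* Main.v *)
Require Import Defs.
From HB Require Import structures.
From mathcomp Require Import all_boot all_order all_algebra.
From mathcomp Require Import all_classical all_reals all_analysis.
From mathcomp Require Import ring lra.
Import Order.TTheory GRing.Theory Num.Theory.
Local Open Scope classical_set_scope.
Local Open Scope ring_scope.

Section H.
Context {R : realType}.

Lemma sumsq_row_mx {n} (x y : 'rV[R]_n) :
  \sum_(i < n + n) (row_mx x y) ord0 i ^+ 2 =
  \sum_(i < n) x ord0 i ^+ 2 + \sum_(i < n) y ord0 i ^+ 2.
Proof.
rewrite big_split_ord; congr (_ + _); apply: eq_bigr => i _.
  by rewrite row_mxEl.
by rewrite row_mxEr.
Qed.

Lemma sphere_sum {n} (v : 'rV[R]_n) : unit_sphere R n v ->
  \sum_(i < n) v ord0 i ^+ 2 = 1.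
Proof.
rewrite /unit_sphere /enorm /= => h.
have h0 : 0 <= \sum_(i < n) v ord0 i ^+ 2 by apply: sumr_ge0 => i _; exact: sqr_ge0.
by rewrite -(sqr_sqrtr h0) h expr1n.
Qed.

Lemma sumsq_lb {n} (v w : 'rV[R]_n) (c c' : R) :
  unit_sphere R n v -> unit_sphere R n w -> 0 <= c * c' ->
  (c - c') ^+ 2 <= \sum_(i < n) (c * v ord0 i - c' * w ord0 i) ^+ 2.
Proof.
move=> hv hw hc.
have -> : (c - c') ^+ 2 = (c ^+ 2 - c * c') * \sum_(i < n) v ord0 i ^+ 2 +
   (c' ^+ 2 - c * c') * \sum_(i < n) w ord0 i ^+ 2.
  by rewrite (sphere_sum _ hv) (sphere_sum _ hw); ring.
rewrite !mulr_sumr -big_split /=; apply: ler_sum => i _.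
have : 0 <= c * c' * (v ord0 i - w ord0 i) ^+ 2 by apply: mulr_ge0 => //; exact: sqr_ge0.
by move=> h; nra.
Qed.

Lemma enorm_leaf {n} (c s c' s' : R) (v1 v2 w1 w2 : 'rV[R]_n) :
  enorm (row_mx (c *: v1) (s *: v2) - row_mx (c' *: w1) (s' *: w2)) =
  Num.sqrt (\sum_(i < n) (c * v1 ord0 i - c' * w1 ord0 i) ^+ 2 +
            \sum_(i < n) (s * v2 ord0 i - s' * w2 ord0 i) ^+ 2).
Proof.
rewrite /enorm opp_row_mx add_row_mx sumsq_row_mx.
by congr (Num.sqrt (_ + _)); apply: eq_bigr => i _; rewrite !mxE.
Qed.

Lemma sphere_ex {n} : (1 <= n)%N -> exists e : 'rV[R]_n, unit_sphere R n e.
Proof.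
move=> hn; pose i0 : 'I_n := Ordinal hn.
exists (\row_i (if i == i0 then 1 else 0)).
rewrite /unit_sphere /enorm /=.
rewrite (bigD1 i0) //= big1 ?addr0; first by rewrite !mxE eqxx expr1n sqrtr1.
by move=> i /negbTE hi; rewrite !mxE hi expr0n.
Qed.

Lemma min_dist_eq {n} (hn : (1 <= n)%N) (eta eta' : R) :
  0 <= cos eta * cos eta' -> 0 <= sin eta * sin eta' ->
  min_dist (leafT R n eta) (leafT R n eta') =
  Num.sqrt ((cos eta - cos eta') ^+ 2 + (sin eta - sin eta') ^+ 2).
Proof.
move=> hc hs.
set D := Num.sqrt _.
have [e he] := sphere_ex hn.
have hlb : lbound [set r | exists a b, leafT R n eta a /\ leafT R n eta' b /\ r = enorm (a - b)] D.
  move=> r [a [b [[v1 [v2 [h1 [h2 ->]]]] [[w1 [w2 [h3 [h4 ->]]]] ->]]]].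
  rewrite enorm_leaf /D; apply: ler_wsqrtr; apply: lerD; exact: sumsq_lb.
have hin : [set r | exists a b, leafT R n eta a /\ leafT R n eta' b /\ r = enorm (a - b)] D.
  exists (row_mx (cos eta *: e) (sin eta *: e)), (row_mx (cos eta' *: e) (sin eta' *: e)).
  split; first by exists e, e.
  split; first by exists e, e.
  rewrite enorm_leaf /D; congr (Num.sqrt (_ + _)).
    rewrite -(mul1r (_ ^+ 2)) -(sphere_sum _ he) mulr_suml; apply: eq_bigr => i _; ring.
  rewrite -(mul1r (_ ^+ 2)) -(sphere_sum _ he) mulr_suml; apply: eq_bigr => i _; ring.
apply/le_anti/andP; split.
  by apply: (ge_inf _ hin); exists D.
by apply: lb_le_inf => //; exists D.
Qed.

Lemma asin_gt0 (y : R) : 0 < y <= 1 -> 0 < asin y.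
Proof.
move=> /andP[y0 y1].
have hy : y \in `[-1, 1] by rewrite in_itv /=; apply/andP; split => //; lra.
have hr : -1 <= y <= 1 by apply/andP; split => //; lra.
have := @ltr_sin R 0 (asin y).
rewrite asinK // sin0 y0 => h; symmetry; apply: h.
  rewrite in_itv /=; have := pi_gt0 R; move=> ?; apply/andP; split; lra.
by rewrite in_itv /= asin_geNpi2 // asin_lepi2.
Qed.

Lemma asin_le (y : R) : 0 < y <= 1 -> asin y <= pi / 2.
Proof. by move=> /andP[y0 y1]; apply: asin_lepi2; apply/andP; split => //; lra. Qed.

Lemma cos_delta (d : R) : 0 < d <= 2 -> cos (2 * asin (d / 2)) = 1 - d ^+ 2 / 2.
Proof.
move=> /andP[d0 d2].
have hr : -1 <= d / 2 <= 1 by apply/andP; split; lra.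
rewrite mulr_natl cos_mulr2n cos_asin // sqr_sqrtr; first by field.
have : d / 2 <= 1 by lra.
have : 0 <= d / 2 by lra.
move=> h1 h2; nra.
Qed.

Lemma part1 (d eta eta' : R) : 0 < d <= 2 ->
  0 <= eta <= pi / 2 -> 0 <= eta' <= pi / 2 ->
  (d <= Num.sqrt ((cos eta - cos eta') ^+ 2 + (sin eta - sin eta') ^+ 2)
   <-> 2 * asin (d / 2) <= `|eta - eta'|).
Proof.
move=> hd he he'.
have hpi := pi_gt0 R.
have -> : (cos eta - cos eta') ^+ 2 + (sin eta - sin eta') ^+ 2 = 2 - 2 * cos (eta - eta').
  rewrite cosB; have := cos2Dsin2 eta; have := cos2Dsin2 eta'; move=> h1 h2.
  lra.
have /andP[d0 d2] := hd.
have hQ : 0 <= 2 - 2 * cos (eta - eta') by have := cos_le1 (eta - eta'); lra.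
rewrite -{1}(gtr0_norm d0) -sqrtr_sqr ler_sqrt //.
have ha0 := asin_gt0 (d / 2).
have ha1 := asin_le (d / 2).
have hd2 : 0 < d / 2 <= 1 by apply/andP; split; lra.
have := ha0 hd2; have := ha1 hd2 => a1 a0.
have hD : 2 * asin (d / 2) \in `[0, pi] by rewrite in_itv /=; apply/andP; split; lra.
have hdel : `|eta - eta'| \in `[0, pi].
  rewrite in_itv /= normr_ge0 /=.
  move: he he' => /andP[e1 e2] /andP[e3 e4].
  rewrite ler_norml; apply/andP; split; lra.
have := ltr_cos hdel hD.
rewrite cos_norm cos_delta // => h.
have -> : (d ^+ 2 <= 2 - 2 * cos (eta - eta')) = (cos (eta - eta') <= 1 - d ^+ 2 / 2).
  apply/idP/idP => ?; lra.
by rewrite leNgt h -leNgt.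
Qed.

Lemma count_bound (L B : R) (m : nat) (a : nat -> R) : 0 < L ->
  (forall i, (i < m)%N -> 0 <= a i <= B) ->
  (forall i j, (i < m)%N -> (j < m)%N -> i <> j -> L <= `|a i - a j|) ->
  (m <= (Num.truncn (B / L)).+1)%N.
Proof.
move=> L0 hab hsep.
pose f i := Num.truncn (a i / L).
have := @uniq_leq_size _ (map f (iota 0 m)) (iota 0 (Num.truncn (B / L)).+1).
rewrite size_map !size_iota => H; apply: H.
  rewrite map_inj_in_uniq ?iota_uniq // => i j hi hj hf; move: hi hj; rewrite !mem_iota /= !add0n => hi hj.
  apply/eqP; apply: contraT => /eqP hne.
  suff hlt : `|a i - a j| < L by move: (hsep i j hi hj hne); rewrite leNgt hlt.
  have [hi0 _] := andP (hab i hi); have [hj0 _] := andP (hab j hj).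
  have hxi : 0 <= a i / L by apply: divr_ge0 => //; exact: ltW.
  have hxj : 0 <= a j / L by apply: divr_ge0 => //; exact: ltW.
  have /andP[h1 h2] := truncn_itv hxi; have /andP[h3 h4] := truncn_itv hxj.
  rewrite /f in hf; rewrite hf in h1 h2.
  rewrite ler_pdivlMr // in h1; rewrite ltr_pdivrMr // in h2.
  rewrite ler_pdivlMr // in h3; rewrite ltr_pdivrMr // in h4.
  move: h2 h4; rewrite -addn1 natrD => h2 h4.
  rewrite ltr_norml; apply/andP; split; nra.
move=> x /mapP [i]; rewrite mem_iota add0n => hi ->.
rewrite mem_iota add0n ltnS /f; apply: le_truncn.
have [_ h] := andP (hab i hi); apply: ler_wpM2r => //.
by rewrite invr_ge0 ltW.
Qed.


Lemma natr_dist1 (k k' : nat) : k <> k' -> 1 <= `|(k%:R : R) - k'%:R|.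
Proof.
move=> hne; case: (ltngtP k k') => h.
- rewrite distrC ger0_norm; last by rewrite subr_ge0 ler_nat ltnW.
  by rewrite lerBrDr addrC natr1 ler_nat.
- rewrite ger0_norm; last by rewrite subr_ge0 ler_nat ltnW.
  by rewrite lerBrDr addrC natr1 ler_nat.
- by exfalso; apply: hne.
Qed.

Lemma sep_md {n} (hn : (1 <= n)%N) (d eta eta' : R) : 0 < d <= 2 ->
  0 <= eta <= pi / 2 -> 0 <= eta' <= pi / 2 ->
  (d <= min_dist (leafT R n eta) (leafT R n eta') <-> delta_eta d <= `|eta - eta'|).
Proof.
move=> hd he he'.
have hpi := pi_gt0 R.
have hc : forall x : R, 0 <= x <= pi / 2 -> 0 <= cos x.
  move=> x /andP[x0 x1]; apply: cos_ge0_pihalf; apply/andP; split; lra.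
have hs : forall x : R, 0 <= x <= pi / 2 -> 0 <= sin x.
  move=> x /andP[x0 x1]; apply: sin_ge0_pi; apply/andP; split; lra.
rewrite min_dist_eq //; last by apply: mulr_ge0; [exact: hs|exact: hs].
  exact: part1.
by apply: mulr_ge0; [exact: hc|exact: hc].
Qed.

End H.

Theorem corollary1 (R : realType) (n : nat) (hn : (1 <= n)%N)
    (d : R) (hd0 : 0 < d) (hd2 : d <= 2) :
  (forall eta eta' : R, 0 <= eta <= pi / 2 -> 0 <= eta' <= pi / 2 ->
     (d <= min_dist (leafT R n eta) (leafT R n eta') <-> delta_eta d <= `|eta - eta'|))
  /\
  ((exists a : nat -> R, exists m : nat,
      m%:Z = t_d d /\ intervals_fit (delta_eta d) m a) /\
   (forall (m : nat) (a : nat -> R),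
      intervals_fit (delta_eta d) m a -> m%:Z <= t_d d))
  /\
  (forall eta0 : R,
     0 <= eta0 <= (pi / 2 - (t_d d)%:~R * delta_eta d) / 2 ->
     forall k k' : nat, k%:Z <= t_d d -> k'%:Z <= t_d d -> k <> k' ->
       d <= min_dist (leafT R n (eta0 + k%:R * delta_eta d))
                     (leafT R n (eta0 + k'%:R * delta_eta d)))
  /\
  (forall k k' : nat,
     k%:Z <= Num.floor ((t_d d)%:~R / 2 : R) ->
     k'%:Z <= Num.floor ((t_d d)%:~R / 2 : R) -> k <> k' ->
       d <= min_dist (leafT R n (pi / 4 + k%:R * delta_eta d))
                     (leafT R n (pi / 4 + k'%:R * delta_eta d))).
Proof.
have hd : 0 < d <= 2 by apply/andP.
have hpi := pi_gt0 R.
have hd2' : 0 < d / 2 <= 1 by apply/andP; split; lra.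
have a0 := asin_gt0 _ hd2'.
have a1 := asin_le _ hd2'.
set a := asin (d / 2) in a0 a1.
set L := delta_eta d.
have LE : L = 2 * a by [].
have L0 : 0 < L by lra.
set X := pi / (4 * a).
have XE : X = (pi / 2) / L.
  by rewrite LE /X; field; apply: lt0r_neq0.
have tE : t_d d = Num.floor X by [].
have ht0 : 0 <= t_d d by rewrite tE floor_ge0 /X; apply: divr_ge0; lra.
have htX : (t_d d)%:~R <= X by rewrite tE floor_le.
have htL : (t_d d)%:~R * L <= pi / 2.
  have : (t_d d)%:~R * L <= X * L by apply: ler_wpM2r => //; exact: ltW.
  by rewrite XE divfK //; apply: lt0r_neq0.
have dist : forall x y : nat, x <> y -> forall e : R,
    L <= `|e + x%:R * L - (e + y%:R * L)|.
  move=> x y hxy e.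
  have -> : e + x%:R * L - (e + y%:R * L) = (x%:R - y%:R) * L by ring.
  rewrite normrM (gtr0_norm L0); rewrite -[X in X <= _]mul1r; apply: ler_wpM2r.
    exact: ltW.
  exact: natr_dist1.
split.
  by move=> eta eta' he he'; apply: sep_md.
split.
  split.
    exists (fun i => i%:R * L), `|t_d d|%N; split; first by rewrite gez0_abs.
    have mE : ((`|t_d d|%N)%:R : R) = (t_d d)%:~R.
      by rewrite -[in RHS](gez0_abs ht0).
    split.
      move=> i hi; split; first by apply: mulr_ge0 => //; exact: ltW.
      have : (i.+1%:R : R) <= (`|t_d d|%N)%:R by rewrite ler_nat.
      rewrite mE -natr1 => h.
      have : (i%:R + 1) * L <= (t_d d)%:~R * L by apply: ler_wpM2r => //; exact: ltW.
      move=> h2; lra.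
    move=> i j hi hj hij x [/andP[x1 x2] /andP[x3 x4]].
    case: (ltngtP i j) => h.
    - have : (i%:R + 1 : R) <= j%:R by rewrite natr1 ler_nat.
      move=> h1.
      have : (i%:R + 1) * L <= j%:R * L by apply: ler_wpM2r => //; exact: ltW.
      move=> h2; lra.
    - have : (j%:R + 1 : R) <= i%:R by rewrite natr1 ler_nat.
      move=> h1.
      have : (j%:R + 1) * L <= i%:R * L by apply: ler_wpM2r => //; exact: ltW.
      move=> h2; lra.
    - by apply: hij.
  move=> m a' [hb hdis].
  case: m hb hdis => [|m] hb hdis; first by [].
  have sep : forall i j, (i < m.+1)%N -> (j < m.+1)%N -> i <> j -> L <= `|a' i - a' j|.
    move=> i j hi hj hij; rewrite leNgt; apply/negP => hlt.
    apply: (hdis i j hi hj hij ((a' i + a' j + L) / 2)).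
    move: hlt; rewrite ltr_norml => /andP[h1 h2].
    split; apply/andP; split; lra.
  have bnd : forall i, (i < m.+1)%N -> 0 <= a' i <= pi / 2 - L.
    move=> i hi; have [h1 h2] := hb i hi; apply/andP; split => //; lra.
  have := count_bound L (pi / 2 - L) (m.+1) a' L0 bnd sep => hm.
  have [h0 h0'] := hb 0%N isT.
  have hB : 0 <= (pi / 2 - L) / L by apply: divr_ge0; lra.
  rewrite tE floor_ge_int.
  change ((m.+1)%:R <= X).
  have : ((m.+1)%:R : R) <= (Num.truncn ((pi / 2 - L) / L)).+1%:R by rewrite ler_nat.
  rewrite -natr1 => h1.
  have h2 := truncn_le ((pi / 2 - L) / L); rewrite hB in h2.
  have -> : X = (pi / 2 - L) / L + 1 by rewrite XE; field; apply: lt0r_neq0.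
  lra.
split.
  move=> eta0 /andP[e0 e1] k k' hk hk' hne.
  have hkR : (k%:R : R) <= (t_d d)%:~R by move: hk; rewrite -(ler_int R).
  have hkR' : (k'%:R : R) <= (t_d d)%:~R by move: hk'; rewrite -(ler_int R).
  have r1 : k%:R * L <= (t_d d)%:~R * L by apply: ler_wpM2r => //; exact: ltW.
  have r2 : k'%:R * L <= (t_d d)%:~R * L by apply: ler_wpM2r => //; exact: ltW.
  have r3 : 0 <= k%:R * L by apply: mulr_ge0 => //; exact: ltW.
  have r4 : 0 <= k'%:R * L by apply: mulr_ge0 => //; exact: ltW.
  apply/sep_md => //; first (apply/andP; split; lra); first (apply/andP; split; lra).
  exact: dist.
move=> k k' hk hk' hne.
have hkR : (k%:R : R) <= (t_d d)%:~R / 2 by move: hk; rewrite floor_ge_int.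
have hkR' : (k'%:R : R) <= (t_d d)%:~R / 2 by move: hk'; rewrite floor_ge_int.
have r1 : k%:R * L <= (t_d d)%:~R / 2 * L by apply: ler_wpM2r => //; exact: ltW.
have r2 : k'%:R * L <= (t_d d)%:~R / 2 * L by apply: ler_wpM2r => //; exact: ltW.
have r3 : 0 <= k%:R * L by apply: mulr_ge0 => //; exact: ltW.
have r4 : 0 <= k'%:R * L by apply: mulr_ge0 => //; exact: ltW.
have r5 : (t_d d)%:~R / 2 * L = (t_d d)%:~R * L / 2 by ring.
apply/sep_md => //; first (apply/andP; split; lra); first (apply/andP; split; lra).
exact: dist.
Qed.
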